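(* Consider Algorithm ProxSVRG (described in the context) with $b=1$, $\eta=1/(3Ln)$, $m=n$, and $T$ a multiple of $m$. Then the output $x_a$ satisfies $$\mathbb E\big[\|\mathcal G_\eta(x_a)\|^2\big]\le \frac{18Ln^2}{3n-2}\cdot\frac{F(x^0)-F(x^* )}{T},$$ where $x^*$ is an optimal solution of $\min_x F(x)$.
   Context: Setting: Let $n,d\ge 1$ be integers and $[n]=\{1,\dots,n\}$. Let $f_1,\dots,f_n:\mathbb R^d\to\mathbb R$ be differentiable (possibly nonconvex) functions, each $L$-smooth for some $L>0$, i.e. $\|\nabla f_i(x)-\nabla f_i(y)\|\le L\|x-y\|$ for all $x,y\in\mathbb R^d$ and $i\in[n]$. Let $f=\frac1n\sum_{i=1}^n f_i$. Let $h:\mathbb R^d\to\mathbb R\cup\{+\infty\}$ be proper, lower semicontinuous and convex, with closed domain. Let $F=f+h$, and let $x^*$ be a global minimizer of $F$ on $\mathbb R^d$ (assumed to exist). For $\eta>0$, $\mathrm{prox}_{\eta h}(x):=\arg\min_{y\in\mathbb R^d}\big(h(y)+\frac1{2\eta}\|y-x\|^2\big)$, and the gradient mapping is $\mathcal G_\eta(x):=\frac1\eta\big[x-\mathrm{prox}_{\eta h}(x-\eta\nabla f(x))\big]$. Algorithm ProxSVRG$(x^0,T,m,b,\eta)$: Given $x^0\in\mathbb R^d$, positive integers $T,m,b$ and $\eta>0$, let $S=\lceil T/m\rceil$ and set $\tilde x^0=x^0_m=x^0$. For $s=0,\dots,S-1$: set $x^{s+1}_0=x^s_m$ and $g^{s+1}=\frac1n\sum_{i=1}^n\nabla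 f_i(\tilde x^s)$; for $t=0,\dots,m-1$: draw a multiset $I_t$ of $b$ indices, each drawn independently and uniformly at random from $[n]$ (with replacement, independently of all previous draws), set $v^{s+1}_t=\frac1b\sum_{i\in I_t}\big(\nabla f_i(x^{s+1}_t)-\nabla f_i(\tilde x^s)\big)+g^{s+1}$ and $x^{s+1}_{t+1}=\mathrm{prox}_{\eta h}(x^{s+1}_t-\eta v^{s+1}_t)$; after the inner loop set $\tilde x^{s+1}=x^{s+1}_m$. The output $x_a$ is chosen uniformly at random from $\{x^{s+1}_t: 0\le t\le m-1,\ 0\le s\le S-1\}$. Expectations are over all randomness of the algorithm. *)

(* Defs.v *)
From mathcomp Require Import ssreflect ssrfun ssrbool eqtype ssrnat seq fintype bigop.
From Stdlib Require Import Reals.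
Open Scope R_scope.

Definition vec (d : nat) := 'I_d -> R.

Definition vadd {d} (u v : vec d) : vec d := fun j => u j + v j.
Definition vsub {d} (u v : vec d) : vec d := fun j => u j - v j.
Definition vscale {d} (a : R) (u : vec d) : vec d := fun j => a * u j.
Definition dot {d} (u v : vec d) : R := \big[Rplus/R0]_(j < d) (u j * v j).
Definition norm2 {d} (u : vec d) : R := dot u u.
Definition norm {d} (u : vec d) : R := sqrt (norm2 u).

Fixpoint rsum (k : nat) (g : nat -> R) : R :=
  match k with O => 0 | S k' => rsum k' g + g k' end.

Definition has_gradient {d} (phi : vec d -> R) (g : vec d) (x : vec d) : Prop :=
  forall eps, 0 < eps -> exists delta, 0 < delta /\
    forall y, norm (vsub y x) < delta ->
      Rabs (phi y - phi x - dot g (vsub y x)) <= eps * norm (vsub y x).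

(* An extended-real-valued h : R^d -> R ∪ {+oo} is encoded by its effective
   domain [dom] and its (real) values on [dom]; h = +oo outside [dom]. *)
Definition proper_dom {d} (dom : vec d -> Prop) : Prop := exists x, dom x.

Definition closed_dom {d} (dom : vec d -> Prop) : Prop :=
  forall x, ~ dom x -> exists delta, 0 < delta /\
    forall y, norm (vsub y x) < delta -> ~ dom y.

Definition convex_ext {d} (dom : vec d -> Prop) (h : vec d -> R) : Prop :=
  forall x y lam, dom x -> dom y -> 0 <= lam <= 1 ->
    dom (vadd (vscale lam x) (vscale (1 - lam) y)) /\
    h (vadd (vscale lam x) (vscale (1 - lam) y)) <= lam * h x + (1 - lam) * h y.

(* lower semicontinuity of the extended function; at points outside a closed
   domain it holds automatically, so only points of the domain matter. *)
Definition lsc_ext {d} (dom : vec d -> Prop) (h : vec d -> R) : Prop :=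
  forall x, dom x -> forall eps, 0 < eps -> exists delta, 0 < delta /\
    forall y, dom y -> norm (vsub y x) < delta -> h x - eps < h y.

Definition is_prox {d} (dom : vec d -> Prop) (h : vec d -> R) (eta : R)
  (x p : vec d) : Prop :=
  dom p /\ forall y, dom y ->
    h p + norm2 (vsub p x) / (2 * eta) <= h y + norm2 (vsub y x) / (2 * eta).

Definition full_grad {d} (n : nat) (grad : nat -> vec d -> vec d) (x : vec d)
  : vec d := fun j => / INR n * rsum n (fun i => grad i x j).

Definition grad_map {d} (n : nat) (grad : nat -> vec d -> vec d)
  (prox : vec d -> vec d) (eta : R) (x : vec d) : vec d :=
  vscale (/ eta) (vsub x (prox (vsub x (vscale eta (full_grad n grad x))))).

(* ProxSVRG with b = 1.  w k is the index drawn at global inner step k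
   (k = s*m + t).  inner xt s t = x^{s+1}_t given snapshot xt = x~^s. *)
Fixpoint inner {d} (n m : nat) (grad : nat -> vec d -> vec d)
  (prox : vec d -> vec d) (eta : R) (w : nat -> nat) (xt : vec d) (s t : nat)
  : vec d :=
  match t with
  | O => xt
  | S t' =>
      let x := inner n m grad prox eta w xt s t' in
      let i := w (s * m + t')%nat in
      let v := vadd (vsub (grad i x) (grad i xt)) (full_grad n grad xt) in
      prox (vsub x (vscale eta v))
  end.

Fixpoint snapshot {d} (n m : nat) (grad : nat -> vec d -> vec d)
  (prox : vec d -> vec d) (eta : R) (w : nat -> nat) (x0 : vec d) (s : nat)
  : vec d :=
  match s with
  | O => x0
  | S s' => inner n m grad prox eta w (snapshot n m grad prox eta w x0 s') s' m
  end.

Definition iterate {d} (n m : nat) (grad : nat -> vec d -> vec d)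
  (prox : vec d -> vec d) (eta : R) (w : nat -> nat) (x0 : vec d) (s t : nat)
  : vec d :=
  inner n m grad prox eta w (snapshot n m grad prox eta w x0 s) s t.

Definition cons_idx (i : nat) (w : nat -> nat) : nat -> nat :=
  fun k => match k with O => i | S k' => w k' end.

(* Expectation over K i.i.d. indices w 0, ..., w (K-1), each uniform on
   {0,...,n-1} (0-based encoding of [n]). *)
Fixpoint expect (n K : nat) (g : (nat -> nat) -> R) : R :=
  match K with
  | O => g (fun _ => O)
  | S K' => / INR n * rsum n (fun i => expect n K' (fun w => g (cons_idx i w)))
  end.

(* Main.v *)
Require Import Defs.
From mathcomp Require Import ssreflect ssrfun ssrbool eqtype ssrnat seq fintype bigop.
From Stdlib Require Import Reals Lra Psatz FunctionalExtensionality.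
Open Scope R_scope.
From HB Require Import structures.
Lemma RplusA : associative Rplus. Proof. move=> *; rewrite Rplus_assoc //. Qed.
HB.instance Definition _ := Monoid.isComLaw.Build R R0 Rplus RplusA Rplus_comm Rplus_0_l.

Lemma bigR_add d (F G : 'I_d -> R) :
  \big[Rplus/R0]_(j < d) (F j + G j) =
  \big[Rplus/R0]_(j < d) F j + \big[Rplus/R0]_(j < d) G j.
Proof. exact: big_split. Qed.

Lemma bigR_scale d c (F : 'I_d -> R) :
  \big[Rplus/R0]_(j < d) (c * F j) = c * \big[Rplus/R0]_(j < d) F j.
Proof. elim: d F => [|d IH] F; first by rewrite !big_ord0; change R0 with 0; ring.
rewrite !big_ord_recr IH. cbn -[bigop.body]. ring. Qed.

Lemma bigR_le d (F G : 'I_d -> R) : (forall j, F j <= G j) ->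
  \big[Rplus/R0]_(j < d) F j <= \big[Rplus/R0]_(j < d) G j.
Proof. elim: d F G => [|d IH] F G H; first by rewrite !big_ord0; change R0 with 0; lra.
rewrite !big_ord_recr. cbn -[bigop.body]. apply Rplus_le_compat; auto. Qed.

Lemma bigR_ext d (F G : 'I_d -> R) : (forall j, F j = G j) ->
  \big[Rplus/R0]_(j < d) F j = \big[Rplus/R0]_(j < d) G j.
Proof. move=> H; apply: eq_bigr => j _; exact: H. Qed.

Lemma rsum_ext k g1 g2 : (forall i, (i < k)%nat -> g1 i = g2 i) -> rsum k g1 = rsum k g2.
Proof. elim: k => [|k IH] H //=. rewrite IH ?H //; move=> i Hi; apply: H; exact: ltnW. Qed.

Lemma rsum_le k g1 g2 : (forall i, (i < k)%nat -> g1 i <= g2 i) -> rsum k g1 <= rsum k g2.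
Proof. elim: k => [|k IH] H /=; first lra. apply Rplus_le_compat; last by apply H.
apply IH => i Hi; apply: H; exact: ltnW. Qed.

Lemma rsum_add k g1 g2 : rsum k (fun i => g1 i + g2 i) = rsum k g1 + rsum k g2.
Proof. elim: k => [|k IH] /=; [ring| rewrite IH; ring]. Qed.

Lemma rsum_scale k c g : rsum k (fun i => c * g i) = c * rsum k g.
Proof. elim: k => [|k IH] /=; [ring| rewrite IH; ring]. Qed.

Lemma rsum_const k c : rsum k (fun _ => c) = INR k * c.
Proof. elim: k => [|k IH]; first by simpl; ring. rewrite [LHS]/= IH S_INR; ring. Qed.

Lemma rsum_big k d (F : nat -> 'I_d -> R) :
  rsum k (fun i => \big[Rplus/R0]_(j < d) F i j) = \big[Rplus/R0]_(j < d) rsum k (fun i => F i j).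
Proof. elim: k => [|k IH] /=. by rewrite big1.
rewrite IH -bigR_add //. Qed.

Lemma rsum_ge0 k g : (forall i, (i < k)%nat -> 0 <= g i) -> 0 <= rsum k g.
Proof. move=> H; have := rsum_le k (fun _ => 0) g H. rewrite rsum_const; lra. Qed.

Lemma rsum_mono k1 k2 g : (k1 <= k2)%nat -> (forall i, 0 <= g i) -> rsum k1 g <= rsum k2 g.
Proof. move=> Hk H; elim: k2 Hk => [|k IH] Hk.
  by move: Hk; rewrite leqn0 => /eqP ->; lra.
rewrite leq_eqVlt in Hk; case/orP: Hk => [/eqP -> | Hk]; first lra.
simpl; have := IH Hk; have := H k; lra. Qed.

Lemma bigR_ge0 d (F : 'I_d -> R) : (forall j, 0 <= F j) -> 0 <= \big[Rplus/R0]_(j < d) F j.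
Proof. move=> H. have := bigR_le d (fun _ => 0) F H. by rewrite big1. Qed.

Lemma norm2_ge0 d (u : vec d) : 0 <= norm2 u.
Proof. apply: bigR_ge0 => j; nra. Qed.

Lemma bigR_sub d (F G : 'I_d -> R) :
  \big[Rplus/R0]_(j < d) (F j - G j) =
  \big[Rplus/R0]_(j < d) F j - \big[Rplus/R0]_(j < d) G j.
Proof. rewrite (bigR_ext _ _ (fun j => F j + (-1) * G j)); last by move=> j; ring.
rewrite big_split bigR_scale /=; ring. Qed.

Lemma bigR_opp d (F : 'I_d -> R) :
  \big[Rplus/R0]_(j < d) (- F j) = - \big[Rplus/R0]_(j < d) F j.
Proof. rewrite (bigR_ext _ _ (fun j => (-1) * F j)); last by move=> j; ring.
rewrite bigR_scale; ring. Qed.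

Ltac bigid := rewrite /norm2 /dot ?rsum_big;
  repeat (rewrite -bigR_sub || rewrite -big_split || rewrite -bigR_scale || rewrite -bigR_opp); rewrite /=;
  apply: eq_bigr => j _; rewrite /vsub /vadd /vscale /=; ring.

Lemma N_conv d (z p q : vec d) l :
  norm2 (vsub (vadd (vscale l z) (vscale (1 - l) p)) q) =
  norm2 (vsub p q) + 2 * l * dot (vsub p q) (vsub z p) + l ^ 2 * norm2 (vsub z p).
Proof. bigid. Qed.

Lemma polar d (p x q : vec d) :
  2 * dot (vsub p x) (vsub q p) = norm2 (vsub q x) - norm2 (vsub p x) - norm2 (vsub q p).
Proof. bigid. Qed.

Lemma Nscale d c (u : vec d) : norm2 (vscale c u) = c ^ 2 * norm2 u.
Proof. bigid. Qed.

Lemma Nsub_sym d (x y : vec d) : norm2 (vsub x y) = norm2 (vsub y x).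
Proof. bigid. Qed.

Lemma young d c (a b : vec d) : 0 < c ->
  2 * dot a b <= c * norm2 a + / c * norm2 b.
Proof. move=> Hc. rewrite /norm2 /dot -!bigR_scale -big_split /=.
apply: bigR_le => j /=. have Hc' : 0 < / c by apply Rinv_0_lt_compat.
have H : 0 <= / c * (c * a j - b j) ^ 2 by apply Rmult_le_pos; [lra| apply pow2_ge_0].
have E : / c * (c * a j - b j) ^ 2 = c * (a j * a j) + / c * (b j * b j) - 2 * (a j * b j).
{ field. lra. }
lra. Qed.

Lemma Nsum2 d (a b : vec d) : norm2 (vsub a b) <= 2 * norm2 a + 2 * norm2 b.
Proof. rewrite /norm2 /dot -!bigR_scale -big_split /=.
apply: bigR_le => j /=. rewrite /vsub.
have := pow2_ge_0 (a j + b j). lra. Qed.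

Lemma Ntri d t (x y z : vec d) : 0 <= t ->
  t * norm2 (vsub z x) <= (t + 1) * norm2 (vsub y x) + t * (t + 1) * norm2 (vsub z y).
Proof. move=> Ht. rewrite /norm2 /dot -!bigR_scale -big_split /=.
apply: bigR_le => j /=. rewrite /vsub.
have := pow2_ge_0 (y j - x j - t * (z j - y j)).
have : (t + 1) * ((y j - x j) * (y j - x j)) + t * (t + 1) * ((z j - y j) * (z j - y j))
   - t * ((z j - x j) * (z j - x j)) = (y j - x j - t * (z j - y j)) ^ 2 by ring.
lra. Qed.

Lemma scal_sq_sum k (a : nat -> R) : (rsum k a) ^ 2 <= INR k * rsum k (fun i => a i ^ 2).
Proof. elim: k => [|k IH]; first by simpl; lra.
rewrite [rsum k.+1 _]/= [rsum k.+1 (fun i => _)]/= S_INR.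
set S := rsum k a in IH *. set Q := rsum k (fun i => a i ^ 2) in IH *.
have HQ : 0 <= Q by apply: rsum_ge0 => i _; apply pow2_ge_0.
have Hk : 0 <= INR k by apply pos_INR.
have key : INR k * ((INR k + 1) * (Q + a k ^ 2) - (S + a k) ^ 2) >= 0.
{ have : INR k * ((INR k + 1) * (Q + a k ^ 2) - (S + a k) ^ 2) =
     INR k * (INR k * Q - S ^ 2) + (INR k * Q - S ^ 2) + (S - INR k * a k) ^ 2 by ring.
  move=> ->. have := pow2_ge_0 (S - INR k * a k).
  have : 0 <= INR k * (INR k * Q - S ^ 2). apply: Rmult_le_pos. lra. lra. lra. }
case: (Rle_lt_or_eq_dec 0 (INR k) Hk) => Hk'.
- nra.
- rewrite -Hk' in IH *. have S0 : S ^ 2 <= 0 by lra. have : S = 0 by nra. move=> ->.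
  nra.
Qed.

Lemma rsum_sub k g1 g2 : rsum k (fun i => g1 i - g2 i) = rsum k g1 - rsum k g2.
Proof. elim: k => [|k IH] /=; [ring| rewrite IH; ring]. Qed.

Lemma Njensen d n (u : nat -> vec d) : (1 <= n)%nat ->
  norm2 (fun j => / INR n * rsum n (fun i => u i j)) <= / INR n * rsum n (fun i => norm2 (u i)).
Proof. move=> Hn. have Hn' : 0 < INR n by apply: lt_0_INR; apply/ltP.
rewrite /norm2 /dot rsum_big -bigR_scale. apply: bigR_le => j.
have H := scal_sq_sum n (fun i => u i j).
have E : rsum n (fun i => u i j * u i j) = rsum n (fun i => u i j ^ 2)
  by apply: rsum_ext => i _; ring.
rewrite E. set S := rsum n (fun i => u i j) in H *. set Q := rsum n (fun i => u i j ^ 2) in H *.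
have Hi : 0 < / INR n by apply Rinv_0_lt_compat.
have : / INR n * S * (/ INR n * S) = / INR n * / INR n * S ^ 2 by ring.
move=> ->. have : / INR n * Q = / INR n * / INR n * (INR n * Q) by field; lra.
move=> ->. apply: Rmult_le_compat_l => //. nra. Qed.

Lemma sq_le_of_norm d (a b : vec d) L : 0 <= L -> norm a <= L * norm b ->
  norm2 a <= L ^ 2 * norm2 b.
Proof. rewrite /norm => HL H.
have Ha := norm2_ge0 _ a. have Hb := norm2_ge0 _ b.
have Sa := sqrt_sqrt _ Ha. have Sb := sqrt_sqrt _ Hb.
have P1 := sqrt_pos (norm2 a). have P2 := sqrt_pos (norm2 b).
rewrite -Sa -Sb.
have : sqrt (norm2 a) * sqrt (norm2 a) <= (L * sqrt (norm2 b)) * (L * sqrt (norm2 b)).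
{ apply: Rmult_le_compat => //. }
move=> H2.
have E : (L * sqrt (norm2 b)) * (L * sqrt (norm2 b)) = L ^ 2 * (sqrt (norm2 b) * sqrt (norm2 b)) by ring.
lra. Qed.

Lemma der_eq f x l1 l2 : l1 = l2 -> derivable_pt_lim f x l1 -> derivable_pt_lim f x l2.
Proof. by move=> ->. Qed.

Lemma norm_scale d h (u : vec d) : norm (vscale h u) = Rabs h * norm u.
Proof. rewrite /norm Nscale sqrt_mult_alt; last by apply pow2_ge_0.
have -> : h ^ 2 = Rsqr h by rewrite /Rsqr; ring. by rewrite sqrt_Rsqr_abs. Qed.

Lemma dot_scale_r d (g u : vec d) h : dot g (vscale h u) = h * dot g u.
Proof. bigid. Qed.

Lemma norm_ge0 d (u : vec d) : 0 <= norm u.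
Proof. exact: sqrt_pos. Qed.

Lemma deriv_phi d (phi : vec d -> R) (g : vec d -> vec d)
  (Hg : forall z, has_gradient phi (g z) z) (x u : vec d) t :
  derivable_pt_lim (fun t => phi (vadd x (vscale t u))) t (dot (g (vadd x (vscale t u))) u).
Proof.
move=> eps Heps. set z := vadd x (vscale t u). set K := norm u + 1.
have Hu := norm_ge0 _ u.
have HK : 0 < K by rewrite /K; lra.
have He : 0 < eps / (2 * K) by apply Rdiv_lt_0_compat; lra.
have [del [Hdel Hd]] := Hg z _ He.
have Hpos : 0 < del / K by apply Rdiv_lt_0_compat.
exists (mkposreal _ Hpos) => h Hh0 Hh. rewrite /= in Hh.
have E : vsub (vadd x (vscale (t + h) u)) z = vscale h u.
{ apply: functional_extensionality => j; rewrite /z /vsub /vadd /vscale; ring. }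
have Hah : 0 < Rabs h by apply Rabs_pos_lt.
have Hn : norm (vscale h u) < del.
{ rewrite norm_scale.
  have H1 : Rabs h * norm u <= Rabs h * K by apply Rmult_le_compat_l; [apply Rabs_pos | rewrite /K; lra].
  have H2 : Rabs h * K < del / K * K by apply Rmult_lt_compat_r.
  have H3 : del / K * K = del by field; lra.
  lra. }
rewrite -E in Hn. have H := Hd _ Hn. rewrite E dot_scale_r norm_scale in H.
rewrite /=.
set A := phi (vadd x (vscale (t + h) u)) in H *. set B := phi z in H *.
set D := dot (g z) u in H *.
have -> : (A - B) / h - D = (A - B - h * D) / h by field.
rewrite /Rdiv Rabs_mult Rabs_inv.
have H4 : eps / (2 * K) * (Rabs h * norm u) <= eps / 2 * Rabs h.
{ have : eps / (2 * K) * (Rabs h * norm u) = eps / 2 * Rabs h * (norm u / K) by field; lra.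
  move=> ->. have : norm u / K <= 1.
  { apply (Rmult_le_reg_r K) => //. have : norm u / K * K = norm u by field; lra. rewrite /K. lra. }
  have : 0 <= eps / 2 * Rabs h by apply Rmult_le_pos; lra. nra. }
have H5 : Rabs (A - B - h * D) * / Rabs h <= eps / 2 * Rabs h * / Rabs h.
{ apply Rmult_le_compat_r; [apply Rlt_le, Rinv_0_lt_compat => // | lra]. }
have H6 : eps / 2 * Rabs h * / Rabs h = eps / 2 by field; lra.
rewrite /Rdiv. lra.
Qed.

Lemma Rabs_le_between a b : Rabs a <= b -> - b <= a <= b.
Proof. case: (Rcase_abs a) => H.
- rewrite Rabs_left //; lra.
- rewrite Rabs_right //; move=> H1; split; lra. Qed.

Lemma dot_sub_l d (a b u : vec d) : dot (vsub a b) u = dot a u - dot b u.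
Proof. bigid. Qed.

Lemma grad_bound d (g : vec d -> vec d) L (HL : 0 < L)
  (Hs : forall x y, norm (vsub (g x) (g y)) <= L * norm (vsub x y)) x u c :
  0 < c -> Rabs (dot (g (vadd x (vscale c u))) u - dot (g x) u) <= L * c * norm2 u.
Proof. move=> Hc. set z := vadd x (vscale c u).
have Ez : vsub z x = vscale c u by apply: functional_extensionality => j; rewrite /z /vsub /vadd /vscale; ring.
have Ez' : vsub x z = vscale (- c) u by apply: functional_extensionality => j; rewrite /z /vsub /vadd /vscale; ring.
have N1 : norm2 (vsub (g z) (g x)) <= L ^ 2 * (c ^ 2 * norm2 u).
{ rewrite -Nscale -Ez. apply: sq_le_of_norm; [lra | exact: Hs]. }
have N2 : norm2 (vsub (g x) (g z)) <= L ^ 2 * (c ^ 2 * norm2 u).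
{ have -> : c ^ 2 = (- c) ^ 2 by ring. rewrite -Nscale -Ez'. apply: sq_le_of_norm; [lra | exact: Hs]. }
have Hlc : 0 < / (L * c) by apply Rinv_0_lt_compat, Rmult_lt_0_compat.
have Y1 := young _ _ (vsub (g z) (g x)) u Hlc.
have Y2 := young _ _ (vsub (g x) (g z)) u Hlc.
rewrite Rinv_inv in Y1 Y2. rewrite !dot_sub_l in Y1 Y2.
have K : / (L * c) * (L ^ 2 * (c ^ 2 * norm2 u)) = L * c * norm2 u by field; lra.
have M1 : / (L * c) * norm2 (vsub (g z) (g x)) <= / (L * c) * (L ^ 2 * (c ^ 2 * norm2 u))
  by apply Rmult_le_compat_l; lra.
have M2 : / (L * c) * norm2 (vsub (g x) (g z)) <= / (L * c) * (L ^ 2 * (c ^ 2 * norm2 u))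
  by apply Rmult_le_compat_l; lra.
apply Rabs_le. lra. Qed.

Lemma descent d (phi : vec d -> R) (g : vec d -> vec d) L (HL : 0 < L)
  (Hg : forall z, has_gradient phi (g z) z)
  (Hs : forall x y, norm (vsub (g x) (g y)) <= L * norm (vsub x y)) x y :
  Rabs (phi y - phi x - dot (g x) (vsub y x)) <= L / 2 * norm2 (vsub y x).
Proof.
set u := vsub y x. set N := norm2 u. set D0 := dot (g x) u.
have Z0 : vadd x (vscale 0 u) = x by apply: functional_extensionality => j; rewrite /vadd /vscale; ring.
have Z1 : vadd x (vscale 1 u) = y by apply: functional_extensionality => j; rewrite /u /vadd /vscale /vsub; ring.
have Dphi := deriv_phi _ phi g Hg x u.
set dphi := fun t => dot (g (vadd x (vscale t u))) u.
have up : phi y - phi x - D0 <= L / 2 * N.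
{ have Dpsi : forall t, derivable_pt_lim (fun t => phi (vadd x (vscale t u)) - t * D0 - (L / 2 * N) * (t * t)) t
     (dphi t - D0 - (L / 2 * N) * (2 * t)).
  { move=> t. pose proof (derivable_pt_lim_minus _ _ t _ _ (derivable_pt_lim_minus _ _ t _ _ (Dphi t) (derivable_pt_lim_mult id (fct_cte D0) t _ _ (derivable_pt_lim_id t) (derivable_pt_lim_const D0 t))) (derivable_pt_lim_mult (fct_cte (L / 2 * N)) (mult_fct id id) t _ _ (derivable_pt_lim_const (L / 2 * N) t) (derivable_pt_lim_mult id id t _ _ (derivable_pt_lim_id t) (derivable_pt_lim_id t)))) as A.
    eapply der_eq; [|exact A]. rewrite /fct_cte /mult_fct /id /dphi. ring. }
  have [c [Ec Hc]] := MVT_cor2 _ _ 0 1 Rlt_0_1 (fun c _ => Dpsi c).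
  rewrite /= Z0 Z1 in Ec. have Hb := grad_bound _ g L HL Hs x u c (proj1 Hc).
  rewrite /dphi in Ec. move: Hb. rewrite -/N -/D0. move/Rabs_le_between => Hb.
  rewrite (_ : L / 2 * N * (2 * c) = L * c * N) in Ec; last by field. lra. }
have lo : - (L / 2 * N) <= phi y - phi x - D0.
{ have Dpsi : forall t, derivable_pt_lim (fun t => phi (vadd x (vscale t u)) - t * D0 + (L / 2 * N) * (t * t)) t
     (dphi t - D0 + (L / 2 * N) * (2 * t)).
  { move=> t. pose proof (derivable_pt_lim_plus _ _ t _ _ (derivable_pt_lim_minus _ _ t _ _ (Dphi t) (derivable_pt_lim_mult id (fct_cte D0) t _ _ (derivable_pt_lim_id t) (derivable_pt_lim_const D0 t))) (derivable_pt_lim_mult (fct_cte (L / 2 * N)) (mult_fct id id) t _ _ (derivable_pt_lim_const (L / 2 * N) t) (derivable_pt_lim_mult id id t _ _ (derivable_pt_lim_id t) (derivable_pt_lim_id t)))) as A.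
    eapply der_eq; [|exact A]. rewrite /fct_cte /mult_fct /id /dphi. ring. }
  have [c [Ec Hc]] := MVT_cor2 _ _ 0 1 Rlt_0_1 (fun c _ => Dpsi c).
  rewrite /= Z0 Z1 in Ec. have Hb := grad_bound _ g L HL Hs x u c (proj1 Hc).
  rewrite /dphi in Ec. move: Hb. rewrite -/N -/D0. move/Rabs_le_between => Hb.
  rewrite (_ : L / 2 * N * (2 * c) = L * c * N) in Ec; last by field. lra. }
apply Rabs_le; lra. Qed.

Lemma prox_ineq d (dom : vec d -> Prop) h eta (q p : vec d) (He : 0 < eta)
  (Hc : convex_ext dom h) : is_prox dom h eta q p ->
  forall z, dom z -> h p <= h z + dot (vsub p q) (vsub z p) / eta.
Proof. move=> [Hp Hmin] z Hz.
set D := dot (vsub p q) (vsub z p). set M := norm2 (vsub z p).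
have HM : 0 <= M := norm2_ge0 _ _.
have Cl : forall l, 0 < l <= 1 -> h p <= h z + D / eta + l * M / (2 * eta).
{ move=> l Hl. have [Hdl Hhl] := Hc z p l Hz Hp (conj (Rlt_le _ _ (proj1 Hl)) (proj2 Hl)).
  have H1 := Hmin _ Hdl. rewrite N_conv -/D -/M in H1.
  set X := h p - h z - D / eta - l * M / (2 * eta).
  have E : l * X = l * h p - l * h z - (2 * l * D + l ^ 2 * M) / (2 * eta) by rewrite /X; field; lra.
  have E2 : (norm2 (vsub p q) + 2 * l * D + l ^ 2 * M) / (2 * eta) =
      norm2 (vsub p q) / (2 * eta) + (2 * l * D + l ^ 2 * M) / (2 * eta) by field; lra.
  have : l * X <= 0 by rewrite E; lra.
  move=> HX. have : X <= 0.
  { case: (Rle_or_lt X 0) => // HX'. have : 0 < l * X by apply Rmult_lt_0_compat; lra. lra. }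
  rewrite /X; lra. }
case: (Rle_or_lt (h p) (h z + D / eta)) => // Hlt.
set eps := h p - h z - D / eta.
have Heps : 0 < eps by rewrite /eps; lra.
set l := Rmin 1 (eta * eps / (M + 1)).
have Hl0 : 0 < eta * eps / (M + 1) by apply Rdiv_lt_0_compat; [apply Rmult_lt_0_compat|]; lra.
have Hl : 0 < l <= 1 by rewrite /l; split; [apply Rmin_pos; lra | apply Rmin_l].
have := Cl l Hl.
have Hle : l <= eta * eps / (M + 1) := Rmin_r _ _.
have : l * M / (2 * eta) <= eta * eps / (M + 1) * M / (2 * eta).
{ rewrite /Rdiv. apply Rmult_le_compat_r; [apply Rlt_le, Rinv_0_lt_compat; lra|].
  apply Rmult_le_compat_r => //. }
have : eta * eps / (M + 1) * M / (2 * eta) = eps * (M / (M + 1)) / 2 by field; lra.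
have : M / (M + 1) < 1.
{ apply (Rmult_lt_reg_r (M + 1)); [lra|]. have : M / (M + 1) * (M + 1) = M by field; lra. lra. }
have : 0 <= M / (M + 1) by apply Rmult_le_pos; [lra | apply Rlt_le, Rinv_0_lt_compat; lra].
rewrite /eps. nra. Qed.

Lemma dot_full_grad d n (grad : nat -> vec d -> vec d) x u :
  dot (full_grad n grad x) u = / INR n * rsum n (fun i => dot (grad i x) u).
Proof. rewrite /dot rsum_big -bigR_scale. apply: eq_bigr => j _.
rewrite /full_grad (rsum_ext _ (fun i => grad i x j * u j) (fun i => u j * grad i x j)).
  rewrite rsum_scale; ring. by move=> i _; ring. Qed.

Lemma f_bounds n d (f : nat -> vec d -> R) (grad : nat -> vec d -> vec d) L (HL : 0 < L)
  (Hn : (1 <= n)%nat)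
  (Hgrad : forall i x, (i < n)%nat -> has_gradient (f i) (grad i x) x)
  (Hsmooth : forall i x y, (i < n)%nat ->
     norm (vsub (grad i x) (grad i y)) <= L * norm (vsub x y)) x y :
  let Fb := fun z => / INR n * rsum n (fun i => f i z) in
  Rabs (Fb y - Fb x - dot (full_grad n grad x) (vsub y x)) <= L / 2 * norm2 (vsub y x).
Proof. move=> Fb. rewrite dot_full_grad /Fb.
have Hn' : 0 < INR n by apply: lt_0_INR; apply/ltP.
have -> : / INR n * rsum n (fun i => f i y) - / INR n * rsum n (fun i => f i x) -
   / INR n * rsum n (fun i => dot (grad i x) (vsub y x)) =
   / INR n * rsum n (fun i => f i y - f i x - dot (grad i x) (vsub y x)).
{ rewrite !rsum_sub; ring. }
have Hi : forall i, (i < n)%nat -> Rabs (f i y - f i x - dot (grad i x) (vsub y x)) <= L / 2 * norm2 (vsub y x).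
{ move=> i Hi. apply: descent => //. move=> z; exact: Hgrad. move=> a b; exact: Hsmooth. }
have H1 := rsum_le n _ (fun _ => L / 2 * norm2 (vsub y x))
  (fun i Hi' => proj2 (Rabs_le_between _ _ (Hi i Hi'))).
have H2 := rsum_le n (fun _ => - (L / 2 * norm2 (vsub y x))) _
  (fun i Hi' => proj1 (Rabs_le_between _ _ (Hi i Hi'))).
rewrite rsum_const in H1. rewrite rsum_const in H2.
have Hinv : 0 < / INR n by apply Rinv_0_lt_compat.
apply Rabs_le. set S := rsum n _ in H1 H2 *.
have E1 : / INR n * (INR n * (L / 2 * norm2 (vsub y x))) = L / 2 * norm2 (vsub y x) by field; lra.
have E2 : / INR n * (INR n * - (L / 2 * norm2 (vsub y x))) = - (L / 2 * norm2 (vsub y x)) by field; lra.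
split.
- rewrite -E2. apply Rmult_le_compat_l; lra.
- rewrite -E1. apply Rmult_le_compat_l; lra.
Qed.

Lemma Ngrad_diff n d (grad : nat -> vec d -> vec d) L (Hn : (1 <= n)%nat) (HL : 0 < L)
  (Hsmooth : forall i x y, (i < n)%nat ->
     norm (vsub (grad i x) (grad i y)) <= L * norm (vsub x y)) x y :
  norm2 (vsub (full_grad n grad x) (full_grad n grad y)) <= L ^ 2 * norm2 (vsub x y).
Proof.
have E : vsub (full_grad n grad x) (full_grad n grad y) =
   (fun j => / INR n * rsum n (fun i => vsub (grad i x) (grad i y) j)).
{ apply: functional_extensionality => j. rewrite /vsub /full_grad rsum_sub; ring. }
rewrite E. apply: Rle_trans; first exact: Njensen.
have Hn' : 0 < INR n by apply: lt_0_INR; apply/ltP.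
have H := rsum_le n _ (fun _ => L ^ 2 * norm2 (vsub x y))
  (fun i Hi => sq_le_of_norm _ _ _ _ (Rlt_le _ _ HL) (Hsmooth i x y Hi)).
rewrite rsum_const in H.
have E2 : / INR n * (INR n * (L ^ 2 * norm2 (vsub x y))) = L ^ 2 * norm2 (vsub x y) by field; lra.
rewrite -E2. apply Rmult_le_compat_l => //. apply Rlt_le, Rinv_0_lt_compat => //. Qed.

Lemma step n d (f : nat -> vec d -> R) (grad : nat -> vec d -> vec d) L (HL : 0 < L)
  (Hn : (1 <= n)%nat)
  (Hgrad : forall i x, (i < n)%nat -> has_gradient (f i) (grad i x) x)
  (Hsmooth : forall i x y, (i < n)%nat ->
     norm (vsub (grad i x) (grad i y)) <= L * norm (vsub x y))
  (dom : vec d -> Prop) (h : vec d -> R) (Hconv : convex_ext dom h)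
  (prox : vec d -> vec d)
  (Hprox : forall x, is_prox dom h (/ (3 * L * INR n)) x (prox x))
  (x xt : vec d) i (Hx : dom x) (Hi : (i < n)%nat) :
  let eta := / (3 * L * INR n) in
  let F := fun x => / INR n * rsum n (fun i => f i x) + h x in
  let v := vadd (vsub (grad i x) (grad i xt)) (full_grad n grad xt) in
  let p := prox (vsub x (vscale eta v)) in
  F p <= F x - (3 * INR n - 2) / (18 * L * INR n ^ 2) * norm2 (grad_map n grad prox eta x)
        - L * (3 * INR n - 1) / 2 * norm2 (vsub p x) + 2 * L / (3 * INR n) * norm2 (vsub x xt).
Proof.
move=> eta F v p.
have Hn' : 0 < INR n by apply: lt_0_INR; apply/ltP.
have He : 0 < eta by apply Rinv_0_lt_compat; apply Rmult_lt_0_compat; lra.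
set g := full_grad n grad x.
set q1 := vsub x (vscale eta g). set pb := prox q1.
set q2 := vsub x (vscale eta v).
have Hpb : dom pb by case: (Hprox q1).
have P1 := prox_ineq _ dom h eta q1 pb He Hconv (Hprox q1) x Hx.
have P2 := prox_ineq _ dom h eta q2 p He Hconv (Hprox q2) pb Hpb.
set Fb := fun z => / INR n * rsum n (fun i => f i z).
have U1 := Rabs_le_between _ _ (f_bounds n d f grad L HL Hn Hgrad Hsmooth x pb).
have U2 := Rabs_le_between _ _ (f_bounds n d f grad L HL Hn Hgrad Hsmooth x p).
rewrite -/Fb -/g in U1 U2.
set A := norm2 (vsub pb x) in U1 U2 P1 *. set B := norm2 (vsub p x) in U2 *.
set C := norm2 (vsub p pb).
have I1 : dot (vsub pb q1) (vsub x pb) = - A - eta * dot g (vsub pb x) by rewrite /A /q1; bigid.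
have I2 : dot (vsub p q2) (vsub pb p) = dot (vsub p x) (vsub pb p) + eta * dot v (vsub pb p)
  by rewrite /q2; bigid.
have I3 : dot g (vsub p x) - dot g (vsub pb x) + dot v (vsub pb p) = dot (vsub g v) (vsub p pb) by bigid.
have Po := polar _ p x pb. rewrite -/B -/A Nsub_sym -/C in Po.
have Y := young _ _ (vsub g v) (vsub p pb) He.
rewrite -/C in Y.
set Dl := norm2 (vsub g v) in Y.
set ie := / eta in P1 P2 Y.
have Hie : ie * eta = 1 by rewrite /ie; field; lra.
rewrite /Rdiv -/ie I1 I2 in P1 P2.
have S1 : F p <= F x + (L - ie / 2) * A + (L / 2 - ie / 2) * B + eta / 2 * Dl.
{ rewrite /F -/Fb.
  have Eb : (dot (vsub p x) (vsub pb p) + eta * dot v (vsub pb p)) * ie =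
     ie * dot (vsub p x) (vsub pb p) + dot v (vsub pb p).
  { have : eta * dot v (vsub pb p) * ie = (ie * eta) * dot v (vsub pb p) by ring. rewrite Hie. nra. }
  rewrite Eb in P2.
  have Ea' : (- A - eta * dot g (vsub pb x)) * ie = - ie * A - dot g (vsub pb x).
  { have : eta * dot g (vsub pb x) * ie = (ie * eta) * dot g (vsub pb x) by ring. rewrite Hie. nra. }
  rewrite Ea' in P1.
  have Po' : ie * (2 * dot (vsub p x) (vsub pb p)) = ie * (A - B - C) by rewrite Po.
  lra. }
have EG : norm2 (grad_map n grad prox eta x) = ie ^ 2 * A.
{ rewrite /grad_map Nscale Nsub_sym. done. }
have EA : A = eta ^ 2 * norm2 (grad_map n grad prox eta x).
{ rewrite EG. have : eta ^ 2 * ie ^ 2 = (ie * eta) ^ 2 by ring. rewrite Hie. nra. }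
have Eie : ie = 3 * L * INR n by rewrite /ie /eta Rinv_inv.
have HD : Dl <= 4 * L ^ 2 * norm2 (vsub x xt).
{ rewrite /Dl. have -> : vsub g v = vsub (vsub (full_grad n grad x) (full_grad n grad xt)) (vsub (grad i x) (grad i xt)).
  { apply: functional_extensionality => j. rewrite /g /v /vsub /vadd; ring. }
  apply: Rle_trans; first exact: Nsum2.
  have := Ngrad_diff n d grad L Hn HL Hsmooth x xt.
  have := sq_le_of_norm _ _ _ _ (Rlt_le _ _ HL) (Hsmooth i x xt Hi). lra. }
set G := norm2 (grad_map n grad prox eta x) in EA *.
set E := norm2 (vsub x xt) in HD *.
have K1 : (L - ie / 2) * A = - ((3 * INR n - 2) / (18 * L * INR n ^ 2)) * G.
{ rewrite EA Eie /eta. field. lra. }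
have K2 : L / 2 - ie / 2 = - (L * (3 * INR n - 1) / 2) by rewrite Eie; field.
have K3 : eta / 2 * Dl <= 2 * L / (3 * INR n) * E.
{ have : eta / 2 * (4 * L ^ 2 * E) = 2 * L / (3 * INR n) * E by rewrite /eta; field; lra.
  move=> <-. apply Rmult_le_compat_l => //. lra. }
rewrite K2 in S1. lra. Qed.

Lemma expect_le n K (g : (nat -> nat) -> R) c : (1 <= n)%nat ->
  (forall w, (forall k, (w k < n)%nat) -> g w <= c) -> expect n K g <= c.
Proof. move=> Hn. elim: K g => [|K IH] g Hg /=.
- apply: Hg => k. done.
- have Hn' : 0 < INR n by apply: lt_0_INR; apply/ltP.
  have Hi : forall i, (i < n)%nat -> expect n K (fun w => g (cons_idx i w)) <= c.
  { move=> i Hi. apply: IH => w Hw. apply: Hg. move=> [|k] /=; [exact: Hi | exact: Hw]. }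
  have H := rsum_le n _ (fun _ => c) Hi.
  rewrite rsum_const in H.
  have E : / INR n * (INR n * c) = c by field; lra.
  rewrite -E. apply Rmult_le_compat_l => //. apply Rlt_le, Rinv_0_lt_compat => //.
Qed.

Lemma N0 d (x : vec d) : norm2 (vsub x x) = 0.
Proof. rewrite /norm2 /dot. apply: big1 => j _. rewrite /vsub; ring. Qed.

Lemma epoch n d (f : nat -> vec d -> R) (grad : nat -> vec d -> vec d) L (HL : 0 < L)
  (Hn : (1 <= n)%nat)
  (Hgrad : forall i x, (i < n)%nat -> has_gradient (f i) (grad i x) x)
  (Hsmooth : forall i x y, (i < n)%nat ->
     norm (vsub (grad i x) (grad i y)) <= L * norm (vsub x y))
  (dom : vec d -> Prop) (h : vec d -> R) (Hconv : convex_ext dom h)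
  (prox : vec d -> vec d)
  (Hprox : forall x, is_prox dom h (/ (3 * L * INR n)) x (prox x))
  (w : nat -> nat) (Hw : forall k, (w k < n)%nat) (x0 : vec d) s
  (Hs : dom (snapshot n n grad prox (/ (3 * L * INR n)) w x0 s)) :
  let eta := / (3 * L * INR n) in
  let F := fun x => / INR n * rsum n (fun i => f i x) + h x in
  F (snapshot n n grad prox eta w x0 s.+1) +
  (3 * INR n - 2) / (18 * L * INR n ^ 2) *
    rsum n (fun t => norm2 (grad_map n grad prox eta (iterate n n grad prox eta w x0 s t)))
  <= F (snapshot n n grad prox eta w x0 s).
Proof.
move=> eta F.
set x := fun t => iterate n n grad prox eta w x0 s t.
have Hn' : 0 < INR n by apply: lt_0_INR; apply/ltP.
have Hdom : forall t, dom (x t).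
{ elim=> [|t IH]; first exact: Hs. exact: (proj1 (Hprox _)). }
set gam := (3 * INR n - 2) / (18 * L * INR n ^ 2).
set a := L * (3 * INR n - 1) / 2.
set c := 2 * L / (3 * INR n).
set G := fun t => norm2 (grad_map n grad prox eta (x t)).
set dd := fun t => norm2 (vsub (x t.+1) (x t)).
set e := fun t => norm2 (vsub (x t) (x O)).
have St : forall t, F (x t.+1) <= F (x t) - gam * G t - a * dd t + c * e t.
{ move=> t. have H := step n d f grad L HL Hn Hgrad Hsmooth dom h Hconv prox Hprox (x t) (x O)
     (w (s * n + t)%nat) (Hdom t) (Hw _).
  exact: H. }
have Inv : forall k, F (x k) + gam * rsum k G + a * rsum k dd <= F (x O) + c * rsum k e.
{ elim=> [|k IH] /=; first lra. have := St k. lra. }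
have dd0 : forall t, 0 <= dd t by move=> t; apply: norm2_ge0.
have Eb : forall t, e t <= INR t * rsum t dd.
{ elim=> [|t IH].
  - rewrite /e N0 /=; lra.
  - case: t IH => [|t] IH.
    + rewrite /= /e /dd. lra.
    + have Ht : 0 < INR t.+1 by apply: lt_0_INR; apply/ltP.
      have T := Ntri _ (INR t.+1) (x O) (x t.+1) (x t.+2) (Rlt_le _ _ Ht).
      rewrite -/(e t.+2) -/(e t.+1) -/(dd t.+1) in T.
      rewrite [rsum t.+2 dd]/= S_INR.
      set D := rsum t.+1 dd in IH *.
      have H1 : INR t.+1 * e t.+2 <= INR t.+1 * ((INR t.+1 + 1) * (D + dd t.+1)).
      { have : (INR t.+1 + 1) * e t.+1 <= (INR t.+1 + 1) * (INR t.+1 * D)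
          by apply Rmult_le_compat_l => //; lra.
        have : INR t.+1 * ((INR t.+1 + 1) * (D + dd t.+1)) =
           (INR t.+1 + 1) * (INR t.+1 * D) + INR t.+1 * (INR t.+1 + 1) * dd t.+1 by ring.
        lra. }
      apply (Rmult_le_reg_l (INR t.+1)) => //. }
have Esum : rsum n e <= INR n * ((INR n - 1) * rsum n dd).
{ rewrite -rsum_const. apply: rsum_le => t Ht.
  apply: Rle_trans; first exact: Eb.
  have HD : 0 <= rsum t dd by apply: rsum_ge0.
  have HDn : rsum t dd <= rsum n dd by apply: rsum_mono => //; exact: ltnW.
  have Htn : INR t <= INR n - 1.
  { have : INR t.+1 <= INR n by apply: le_INR; apply/leP. rewrite S_INR. lra. }
  have Ht0 : 0 <= INR t := pos_INR t.
  apply: Rle_trans; first by apply: Rmult_le_compat_l; [exact: Ht0 | exact: HDn].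
  apply Rmult_le_compat_r; [apply: rsum_ge0 => i _; exact: dd0 | exact: Htn]. }
have Dn : 0 <= rsum n dd by apply: rsum_ge0.
have Key : c * rsum n e <= a * rsum n dd.
{ apply: Rle_trans. apply: Rmult_le_compat_l; [rewrite /c; apply Rlt_le, Rdiv_lt_0_compat; lra | exact: Esum].
  have : c * (INR n * ((INR n - 1) * rsum n dd)) = (2 * L * (INR n - 1) / 3) * rsum n dd
    by rewrite /c; field; lra.
  move=> ->. apply Rmult_le_compat_r => //. rewrite /a.
  have : L * (3 * INR n - 1) / 2 - 2 * L * (INR n - 1) / 3 = L * ((5 * INR n + 1) / 6) by field.
  have : 0 <= L * ((5 * INR n + 1) / 6) by apply Rmult_le_pos; lra. lra. }
have := Inv n. rewrite /x /iterate /=. lra.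
Qed.

Theorem theorem1
  (n d : nat) (Hn : (1 <= n)%nat) (Hd : (1 <= d)%nat)
  (f : nat -> vec d -> R) (grad : nat -> vec d -> vec d) (L : R) (HL : 0 < L)
  (Hgrad : forall i x, (i < n)%nat -> has_gradient (f i) (grad i x) x)
  (Hsmooth : forall i x y, (i < n)%nat ->
     norm (vsub (grad i x) (grad i y)) <= L * norm (vsub x y))
  (dom : vec d -> Prop) (h : vec d -> R)
  (Hproper : proper_dom dom) (Hclosed : closed_dom dom)
  (Hconv : convex_ext dom h) (Hlsc : lsc_ext dom h)
  (xstar : vec d) (Hxstar_dom : dom xstar)
  (Hxstar : forall y, dom y ->
     / INR n * rsum n (fun i => f i xstar) + h xstar
     <= / INR n * rsum n (fun i => f i y) + h y)
  (prox : vec d -> vec d)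
  (Hprox : forall x, is_prox dom h (/ (3 * L * INR n)) x (prox x))
  (x0 : vec d) (Hx0 : dom x0)
  (S T : nat) (HS : (1 <= S)%nat) (HT : T = (S * n)%nat) :
  let eta := / (3 * L * INR n) in
  let F := fun x => / INR n * rsum n (fun i => f i x) + h x in
  expect n T (fun w =>
     / INR T * rsum S (fun s => rsum n (fun t =>
        norm2 (grad_map n grad prox eta (iterate n n grad prox eta w x0 s t)))))
  <= 18 * L * INR n ^ 2 / (3 * INR n - 2) * ((F x0 - F xstar) / INR T).
Proof.
move=> eta F.
have Hn' : 0 < INR n by apply: lt_0_INR; apply/ltP.
have HS' : 0 < INR S by apply: lt_0_INR; apply/ltP.
have HT' : 0 < INR T by rewrite HT mult_INR; apply Rmult_lt_0_compat.
have Hn1 : 1 <= INR n by have := le_INR 1 n (elimT leP Hn); rewrite /=.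
set gam := (3 * INR n - 2) / (18 * L * INR n ^ 2).
have Hgam : 0 < gam by rewrite /gam; apply Rdiv_lt_0_compat; [lra | apply Rmult_lt_0_compat; [lra | apply pow_lt; lra]].
apply: expect_le => // w Hw.
have Hin : forall xt s t, dom xt -> dom (inner n n grad prox eta w xt s t).
{ move=> xt s; elim=> [|t IH] Hxt //. exact: (proj1 (Hprox _)). }
have Hsd : forall s, dom (snapshot n n grad prox eta w x0 s).
{ elim=> [|s IH] //=. exact: Hin. }
have Glob : forall k, F (snapshot n n grad prox eta w x0 k) +
   gam * rsum k (fun s => rsum n (fun t =>
        norm2 (grad_map n grad prox eta (iterate n n grad prox eta w x0 s t)))) <= F x0.
{ elim=> [|k IH]; first by rewrite /=; lra.
  rewrite [rsum k.+1 _]/=.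
  have E := epoch n d f grad L HL Hn Hgrad Hsmooth dom h Hconv prox Hprox w Hw x0 k (Hsd k).
  rewrite -/eta -/F -/gam in E. lra. }
have := Glob S. have := Hxstar _ (Hsd S). rewrite -/(F xstar) -/(F _).
set Tot := rsum S _. move=> H1 H2.
have HTot : Tot <= (F x0 - F xstar) / gam.
{ apply (Rmult_le_reg_l gam) => //. have : gam * ((F x0 - F xstar) / gam) = F x0 - F xstar by field; lra. lra. }
have E : 18 * L * INR n ^ 2 / (3 * INR n - 2) * ((F x0 - F xstar) / INR T) =
   / INR T * ((F x0 - F xstar) / gam).
{ rewrite /gam. field. repeat split; first [lra | apply pow_nonzero; lra]. }
rewrite E. apply Rmult_le_compat_l => //. apply Rlt_le, Rinv_0_lt_compat => //.
Qed.
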